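(* Let $\mathcal{D}$ be a $\{K_3,K_4\}$-decomposition of $K_{18}$ with $\alpha=13$, let $W$ be the set of vertices $x$ with $\alpha_x\ge 2$, and for $i\in\{0,1,2,3\}$ let $t_i$ be the number of copies of $K_3$ in $\mathcal{D}$ having exactly $i$ vertices in $W$. Then $(t_0,t_1,t_2,t_3)\neq(1,1,6,5)$.
   Context: A $\{K_3,K_4\}$-decomposition of $K_v$ is a collection of subgraphs, each isomorphic to $K_3$ or $K_4$, such that every edge of $K_v$ lies in exactly one of them. $\alpha$ is the number of copies of $K_3$ in the decomposition, and for a vertex $x$, $\alpha_x$ is the number of copies of $K_3$ in the decomposition containing $x$. *)

(* Defs.v *)
From mathcomp Require Import all_boot.
Set Implicit Arguments. Unset Strict Implicit. Unset Printing Implicit Defensive.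

(* A {K3,K4}-decomposition of K_v on vertex set 'I_v: each block (copy of K3 or
   K4) is represented by its vertex set (a complete subgraph of K_v is
   determined by its vertices); every edge {x,y} (x <> y) lies in exactly one
   block. *)
Definition K34_decomposition (v : nat) (D : {set {set 'I_v}}) : Prop :=
  (forall B, B \in D -> #|B| = 3 \/ #|B| = 4) /\
  (forall x y : 'I_v, x != y ->
     #|[set B in D | (x \in B) && (y \in B)]| = 1).

Definition triangles v (D : {set {set 'I_v}}) : {set {set 'I_v}} :=
  [set B in D | #|B| == 3].

Definition alpha v (D : {set {set 'I_v}}) : nat := #|triangles D|.

Definition alpha_at v (D : {set {set 'I_v}}) (x : 'I_v) : nat :=
  #|[set B in triangles D | x \in B]|.

Definition Wset v (D : {set {set 'I_v}}) : {set 'I_v} :=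
  [set x | 2 <= alpha_at D x].

Definition tcount v (D : {set {set 'I_v}}) (i : nat) : nat :=
  #|[set B in triangles D | #|B :&: Wset D| == i]|.

(* Main.v *)
Require Import Defs.
From mathcomp Require Import all_boot.
From mathcomp Require Import zify.
Set Implicit Arguments. Unset Strict Implicit. Unset Printing Implicit Defensive.

Lemma cardsum (T : finType) (A : {set T}) (P : pred T) :
  #|[set B in A | P B]| = \sum_(B in A) (P B : nat).
Proof.
rewrite -sum1_card big_mkcond [RHS]big_mkcond /=; apply: eq_bigr => B _.
by rewrite inE; case: (B \in A); case: (P B).
Qed.

Lemma xch v (F : {set {set 'I_v}}) (S : {set 'I_v}) (G : 'I_v -> {set 'I_v} -> nat) :
  \sum_(x in S) \sum_(B in F | x \in B) G x B = \sum_(B in F) \sum_(x in B :&: S) G x B.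
Proof.
rewrite [LHS](eq_bigr (fun x => \sum_(B in F) if x \in B then G x B else 0));
  last by move=> x _; rewrite big_mkcondr.
rewrite exchange_big /=; apply: eq_bigr => B _.
rewrite big_mkcond [RHS]big_mkcond; apply: eq_bigr => x _.
by rewrite inE; case: (x \in B); case: (x \in S).
Qed.

Lemma sumpairs v (A : {set 'I_v}) : \sum_(x in A) #|A :\ x| = #|A| * #|A|.-1.
Proof.
rewrite (eq_bigr (fun _ => #|A|.-1)); first by rewrite sum_nat_const.
by move=> x xA; rewrite (cardsD1 x A) xA.
Qed.

Section Dec.
Variable v : nat.
Variable D : {set {set 'I_v}}.
Hypothesis H2 : forall x y : 'I_v, x != y ->
     #|[set B in D | (x \in B) && (y \in B)]| = 1.

Lemma L2g x (S : {set 'I_v}) :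
  \sum_(B in D | x \in B) #|(B :&: S) :\ x| = #|S :\ x|.
Proof.
rewrite -[RHS]sum1_card.
rewrite [RHS](eq_bigr (fun y => \sum_(B in D) ((x \in B) && (y \in B) : nat))); last first.
  move=> y; rewrite in_setD1 => /andP[yx _].
  by rewrite -cardsum H2 // eq_sym.
rewrite exchange_big /= big_mkcondr /=; apply: eq_bigr => B _.
case xB: (x \in B); last by rewrite big1.
rewrite -sum1_card big_mkcond [RHS]big_mkcond /=; apply: eq_bigr => y _.
by rewrite !inE; case: (y == x); case: (y \in B); case: (y \in S).
Qed.

Lemma L1 (S : {set 'I_v}) :
  \sum_(B in D) #|B :&: S| * #|B :&: S|.-1 = #|S| * #|S|.-1.
Proof.
rewrite -sumpairs.
rewrite [RHS](eq_bigr (fun x => \sum_(B in D | x \in B) #|(B :&: S) :\ x|));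
  last by move=> x _; rewrite L2g.
rewrite xch; apply: eq_bigr => B _.
rewrite -sumpairs; apply: eq_bigr => x _; by [].
Qed.

Lemma L2W (W : {set 'I_v}) :
  \sum_(B in D) #|B :&: W| * #|B|.-1 = \sum_(x in W) #|[set: 'I_v] :\ x|.
Proof.
rewrite [RHS](eq_bigr (fun x => \sum_(B in D | x \in B) #|(B :&: setT) :\ x|));
  last by move=> x _; rewrite L2g.
rewrite xch; apply: eq_bigr => B _.
rewrite -sum_nat_const; apply: eq_bigr => x; rewrite inE => /andP[xB _].
by rewrite setIT (cardsD1 x B) xB.
Qed.

Hypothesis H1 : forall B, B \in D -> #|B| = 3 \/ #|B| = 4.

Lemma splitD (f : {set 'I_v} -> nat) :
  \sum_(B in D) f B = \sum_(B in triangles D) f B + \sum_(B in [set B in D | #|B| == 4]) f B.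
Proof.
rewrite (bigID (fun B : {set 'I_v} => #|B| == 3)) /=; congr (_ + _); apply: eq_bigl => B; rewrite !inE //.
case BD: (B \in D) => //=; by case: (H1 BD) => ->.
Qed.

Lemma tsum (W : {set 'I_v}) (g : nat -> nat) :
  W = Wset D ->
  \sum_(B in triangles D) g #|B :&: W| =
  g 0 * tcount D 0 + g 1 * tcount D 1 + g 2 * tcount D 2 + g 3 * tcount D 3.
Proof.
move=> ->.
rewrite /tcount !cardsum !big_distrr /= -!big_split /=; apply: eq_bigr => B.
rewrite inE => /andP[_ /eqP B3].
have : #|B :&: Wset D| <= 3 by rewrite -B3 subset_leq_card // subsetIl.
move: #|B :&: Wset D| => n.
case: n => [|[|[|[|n]]]] //= _; lia.
Qed.

End Dec.

Theorem mainTheorem12 (D : {set {set 'I_18}}) :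
  K34_decomposition D -> alpha D = 13 ->
  (tcount D 0, tcount D 1, tcount D 2, tcount D 3) <> (1, 1, 6, 5).
Proof.
move=> [H1 H2] Ha [e0 e1 e2 e3].
set W := Wset D.
set Q := [set B in D | #|B| == 4].
have F1 := L1 H2 [set: 'I_18].
rewrite (splitD H1) cardsT card_ord in F1.
rewrite (eq_bigr (fun _ => 6)) in F1; last by move=> B; rewrite inE setIT => /andP[_ /eqP ->].
rewrite [X in _ + X = _](eq_bigr (fun _ => 12)) in F1; last by move=> B; rewrite inE setIT => /andP[_ /eqP ->].
rewrite !sum_nat_const -/(alpha D) Ha in F1.
have F2 := L1 H2 W.
rewrite (splitD H1) (tsum (fun k => k * k.-1) (erefl W)) e0 e1 e2 e3 /= in F2.
have F4 := L2W H2 W.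
rewrite (splitD H1) in F4.
rewrite (eq_bigr (fun B => #|B :&: W| * 2)) in F4; last by move=> B; rewrite inE => /andP[_ /eqP ->].
rewrite [X in _ + X = _](eq_bigr (fun B => #|B :&: W| * 3)) in F4; last by move=> B; rewrite inE => /andP[_ /eqP ->].
rewrite (tsum (fun k => k * 2) (erefl W)) e0 e1 e2 e3 /= in F4.
rewrite [X in _ = X](eq_bigr (fun _ => 17)) in F4; last by move=> x _; have := cardsD1 x [set: 'I_18]; rewrite in_setT cardsT card_ord /=; move: (#|_ :\ x|) => k; lia.
rewrite sum_nat_const -big_distrl /= in F4.
have F3 : \sum_(x in ~: W) alpha_at D x = 11.
  rewrite (eq_bigr (fun x => \sum_(B in triangles D | x \in B) 1)); last first.
    by move=> x _; rewrite /alpha_at -sum1_card; apply: eq_bigl => B; rewrite !inE.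
  rewrite xch (eq_bigr (fun B => 3 - #|B :&: W|)).
    by rewrite (tsum (fun k => 3 - k) (erefl W)) e0 e1 e2 e3.
  move=> B; rewrite inE => /andP[_ /eqP B3].
  rewrite sum1_card; have := cardsID W B; rewrite setDE B3; lia.
have F3' : \sum_(x in ~: W) alpha_at D x <= #|~: W|.
  rewrite -sum1_card; apply: leq_sum => x; rewrite !inE -ltnNge ltnS //.
have Wc := cardsC W; rewrite card_ord in Wc.
have F5 : \sum_(B in Q) #|B :&: W| <= \sum_(B in Q) 1 + \sum_(B in Q) #|B :&: W| * #|B :&: W|.-1.
  rewrite -big_split /=; apply: leq_sum => B _.
  case: #|B :&: W| => [|n] //=; nia.
rewrite sum1_card /Q in F5.
move: F4 F5; move: (\sum_(B in [set B0 in D | #|B0| == 4]) #|B :&: W|) => s F4 F5.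
move: F2 F5; move: (\sum_(B in [set B0 in D | #|B0| == 4]) #|B :&: W| * #|B :&: W|.-1) => s2 F2 F5.
move: F1 F5; move: (#|[set B in D | #|B| == 4]|) => q F1 F5.
have : #|W| <= 7 by lia.
move: #|W| F1 F2 F4 Wc => n F1 F2 F4 Wc.
case: n F1 F2 F4 Wc => [|[|[|[|[|[|[|[|n]]]]]]]] /= => *; lia.
Qed.
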